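(* In BID-logic the following logical equivalences hold: (1) $=\!\!(t_1,\dots,t_n)\equiv \big(=\!\!(t_1)\wedge\dots\wedge=\!\!(t_{n-1})\big)\to=\!\!(t_n)$ for any terms $t_1,\dots,t_n$; (2) $\neg\phi\equiv\phi\to\bot$ whenever $\phi$ is an atom, i.e. a first-order atomic formula or a dependence atom $=\!\!(t_1,\dots,t_n)$ (where $\neg\phi$ is the corresponding negated atomic formula, resp. $\neg=\!\!(t_1,\dots,t_n)$); (3) $(\phi\to\bot)\to\bot\equiv\phi$ whenever $\phi$ is a flat formula; (4) $\phi\otimes\psi\equiv(\phi\to\bot)\to\psi$ whenever $\phi$ and $\psi$ are flat formulas. Here $\phi\equiv\psi$ means that for every suitable structure $M$ and every team $X$ of $M$ with $dom(X)\supseteq Fv(\phi)\cup Fv(\psi)$, $M\models_X\phi$ iff $M\models_X\psi$.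
   Context: Fix a first-order signature; structures have non-empty domains. An assignment on $M$ is a function from a finite set of variables into the domain of $M$; $s(a/x)$ agrees with $s$ except that it sends $x$ to $a$. A team $X$ of $M$ is a set of assignments all with the same domain $dom(X)$. For $F:X\to M$, $X(F/x)=\{s(F(s)/x):s\in X\}$; $X(M/x)=\{s(a/x):a\in M,s\in X\}$. Formulas of BID-logic: $\phi::=\alpha\mid=\!\!(t_1,\dots,t_n)\mid\neg=\!\!(t_1,\dots,t_n)\mid\bot\mid\phi\wedge\phi\mid\phi\otimes\phi\mid\phi\veebar\phi\mid\phi\to\phi\mid\phi\multimap\phi\mid\forall x\phi\mid\exists x\phi$, with $\alpha$ a first-order literal (atomic or negated atomic formula) and $t_i$ terms; $Fv(=\!\!(t_1,\dots,t_n))$ is the set of variables in the $t_i$, otherwise free variables as usual. Semantics for teams $X$ with $dom(X)\supseteq$ free variables: $M\models_X\alpha$ iff $M\models_s\alpha$ for all $s\in X$; $M\models_X=\!\!(t_1,\dots,t_n)$ iff for all $s,s'\in X$ with $s(t_i)=s'(t_i)$ for all $i<n$, $s(t_n)=s'(t_n)$ (so $M\models_X=\!\!(t)$ iff $t$ takes a single value on $X$); $M\models_X\neg=\!\!(\dots)$ iff $X=\emptyset$; $M\models_X\bot$ iff $X=\emptyset$; $\wedge$ as usual; $M\models_X\phi\otimes\psi$ iff $X=Y\cup Z$ for some $Y,Z\subseteq X$ with $M\models_Y\phi$, $M\models_Z\psi$; $M\models_X\phi\veebar\psi$ iff $M\models_X\phi$ or $M\models_X\psi$; $M\models_X\phi\to\psi$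 iff for all $Y\subseteq X$, $M\models_Y\phi$ implies $M\models_Y\psi$; $M\models_X\phi\multimap\psi$ iff for all teams $Y$ with $dom(Y)=dom(X)$, $M\models_Y\phi$ implies $M\models_{X\cup Y}\psi$; $M\models_X\exists x\phi$ iff $M\models_{X(F/x)}\phi$ for some $F:X\to M$; $M\models_X\forall x\phi$ iff $M\models_{X(M/x)}\phi$. A formula $\phi$ is flat if for all suitable $M$ and teams $X$: $M\models_X\phi$ iff $M\models_{\{s\}}\phi$ for all $s\in X$. *)

(* Defs.v *)
From mathcomp Require Import all_boot.
From Stdlib Require List.

Set Implicit Arguments.
Unset Strict Implicit.
Unset Printing Implicit Defensive.

Record signature : Type := Signature {
  funsym : Type;               (* function symbols (constants = arity 0) *)
  fun_ar : funsym -> nat;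
  relsym : Type;
  rel_ar : relsym -> nat
}.

Inductive term (S : signature) : Type :=
| Var : nat -> term S
| App : forall f : funsym S, ('I_(fun_ar f) -> term S) -> term S.
Arguments Var {S} _.

Record structure (S : signature) : Type := Structure {
  carrier : Type;
  witness : carrier;           (* the domain is non-empty *)
  fun_int : forall f : funsym S, ('I_(fun_ar f) -> carrier) -> carrier;
  rel_int : forall r : relsym S, ('I_(rel_ar r) -> carrier) -> Prop
}.

(* An assignment is a partial function from variables into the domain, with
   finite domain (the domain is made explicit in the notion of team below). *)
Definition assignment S (M : structure S) := nat -> option (carrier M).

Definition upd S (M : structure S) (s : assignment M) (x : nat) (a : carrier M)
  : assignment M := fun y => if y == x then Some a else s y.

Definition team S (M : structure S) := assignment M -> Prop.

Definition is_team S (M : structure S) (D : seq nat) (X : team M) : Prop :=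
  forall s, X s -> forall x, isSome (s x) = (x \in D).

(* Value of a term (variables outside the domain get the witness; this never
   matters since the semantics is only used when dom(X) contains Fv). *)
Fixpoint eval S (M : structure S) (s : assignment M) (t : term S) : carrier M :=
  match t with
  | Var x => odflt (witness M) (s x)
  | App f a => @fun_int S M f (fun i => eval s (a i))
  end.

Fixpoint term_in S (D : seq nat) (t : term S) : Prop :=
  match t with
  | Var x => x \in D
  | App f a => forall i, term_in D (a i)
  end.

Inductive formula (S : signature) : Type :=
| Rel  : forall r : relsym S, ('I_(rel_ar r) -> term S) -> formula S
| NRel : forall r : relsym S, ('I_(rel_ar r) -> term S) -> formula S
| Eq   : term S -> term S -> formula S
| NEq  : term S -> term S -> formula S
| Dep  : seq (term S) -> term S -> formula S   (* Dep [t1;..;t(n-1)] tn  is  =(t1,..,tn) *)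
| NDep : seq (term S) -> term S -> formula S
| Bot  : formula S
| And  : formula S -> formula S -> formula S
| Tensor : formula S -> formula S -> formula S
| Vee  : formula S -> formula S -> formula S
| Imp  : formula S -> formula S -> formula S
| Lolli : formula S -> formula S -> formula S
| Forall : nat -> formula S -> formula S
| Exists : nat -> formula S -> formula S.

Arguments Bot {S}.
Arguments Rel {S} r _.
Arguments NRel {S} r _.
Arguments App {S} f _.

Fixpoint fv_in S (D : seq nat) (phi : formula S) : Prop :=
  match phi with
  | Rel r a | NRel r a => forall i, term_in D (a i)
  | Eq t u | NEq t u => term_in D t /\ term_in D u
  | Dep ts t | NDep ts t => (forall u, List.In u ts -> term_in D u) /\ term_in D t
  | Bot => True
  | And p q | Tensor p q | Vee p q | Imp p q | Lolli p q => fv_in D p /\ fv_in D q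
  | Forall x p | Exists x p => fv_in (x :: D) p
  end.

(* Team semantics: sat M D X phi  is  M |=_X phi  for a team X of domain D. *)
Fixpoint sat S (M : structure S) (D : seq nat) (X : team M) (phi : formula S)
  : Prop :=
  match phi with
  | Rel r a => forall s, X s -> @rel_int S M r (fun i => eval s (a i))
  | NRel r a => forall s, X s -> ~ @rel_int S M r (fun i => eval s (a i))
  | Eq t u => forall s, X s -> eval s t = eval s u
  | NEq t u => forall s, X s -> eval s t <> eval s u
  | Dep ts t => forall s s', X s -> X s' ->
      (forall u, List.In u ts -> eval s u = eval s' u) -> eval s t = eval s' t
  | NDep ts t => forall s, ~ X s
  | Bot => forall s, ~ X s
  | And p q => sat D X p /\ sat D X q
  | Tensor p q => exists Y Z : team M,
      (forall s, X s <-> (Y s \/ Z s)) /\ sat D Y p /\ sat D Z q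
  | Vee p q => sat D X p \/ sat D X q
  | Imp p q => forall Y : team M, (forall s, Y s -> X s) ->
      sat D Y p -> sat D Y q
  | Lolli p q => forall Y : team M, is_team D Y ->
      sat D Y p -> sat D (fun s => X s \/ Y s) q
  | Exists x p => exists F : assignment M -> carrier M,
      sat (x :: D) (fun s' => exists s, X s /\ s' = upd s x (F s)) p
  | Forall x p =>
      sat (x :: D) (fun s' => exists s a, X s /\ s' = upd s x a) p
  end.

Definition flat S (phi : formula S) : Prop :=
  forall (M : structure S) (D : seq nat) (X : team M),
    is_team D X -> fv_in D phi ->
    (sat D X phi <-> forall s, X s -> sat D (fun s' => s' = s) phi).

Definition lequiv S (phi psi : formula S) : Prop :=
  forall (M : structure S) (D : seq nat) (X : team M),
    is_team D X -> fv_in D phi -> fv_in D psi ->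
    (sat D X phi <-> sat D X psi).

Definition const_conj S (t1 : term S) (ts : seq (term S)) : formula S :=
  foldl (fun p t => And p (Dep [::] t)) (Dep [::] t1) ts.

(* Main.v *)
Require Import Defs.
From mathcomp Require Import all_boot.
From Stdlib Require Import Classical.
From Stdlib Require List.
Set Implicit Arguments.
Unset Strict Implicit.

Lemma sub_team S (M : structure S) D (X Y : team M) :
  is_team D X -> (forall s, Y s -> X s) -> is_team D Y.
Proof. move=> H HY s Ys; exact: H _ (HY _ Ys). Qed.

Lemma flat_sub S (M : structure S) D (X Y : team M) (phi : formula S) :
  flat phi -> is_team D X -> fv_in D phi -> (forall s, Y s -> X s) ->
  (sat D Y phi <-> forall s, Y s -> sat D (fun s' => s' = s) phi).
Proof. move=> F T Fv HY; apply: F => //; exact: sub_team T HY. Qed.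

Lemma single_sub S (M : structure S) (X : team M) s :
  X s -> forall s', s' = s -> X s'.
Proof. by move=> Xs s' ->. Qed.

Lemma foldl_cc S (M : structure S) D (Y : team M) (ts : seq (term S)) p :
  sat D Y (foldl (fun p t => And p (Dep [::] t)) p ts) <->
  sat D Y p /\ forall t, List.In t ts -> forall s s', Y s -> Y s' -> eval s t = eval s' t.
Proof.
elim: ts p => [|t ts IH] p /=.
  by split; [move=> H; split => // |case].
rewrite IH /=; split.
  move=> [[Hp Ht] Hts]; split => // u /= [<-|Hu] s s' Ys Ys'.
    by apply: Ht.
  by apply: Hts.
move=> [Hp H]; split; [split => // s s' Ys Ys' _; by apply: H => //; simpl; left|
  move=> u Hu s s' Ys Ys'; by apply: H => //; simpl; right].
Qed.

Lemma cc_sat S (M : structure S) D (Y : team M) t1 (ts : seq (term S)) :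
  sat D Y (const_conj t1 ts) <->
  forall t, List.In t (t1 :: ts) -> forall s s', Y s -> Y s' -> eval s t = eval s' t.
Proof.
rewrite /const_conj foldl_cc /=; split.
  move=> [H1 H2] t [<-|Ht] s s' Ys Ys'; [by apply: H1|by apply: H2].
move=> H; split; first by move=> s s' Ys Ys' _; apply: H => //; simpl; left.
move=> t Ht s s' Ys Ys'; by apply: H => //; simpl; right.
Qed.

Lemma neg_flat S (M : structure S) D (X Y : team M) (phi : formula S) :
  flat phi -> is_team D X -> fv_in D phi -> (forall s, Y s -> X s) ->
  (sat D Y (Imp phi Bot) <-> forall s, Y s -> ~ sat D (fun s' => s' = s) phi).
Proof.
move=> F T Fv HY /=; split.
  move=> H s Ys Hs; apply: (H (fun s' => s' = s) _ Hs s erefl).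
  by move=> x ->.
move=> H Z HZ Hz s Zs.
have := (flat_sub F T Fv (fun s Zs => HY _ (HZ _ Zs))).1 Hz s Zs.
exact: H _ (HZ _ Zs).
Qed.

Unset Implicit Arguments.

Theorem lemma3p1 (S : signature) :
  (* (1), n >= 2: =(t1,...,tn) == (=(t1) /\ ... /\ =(t(n-1))) -> =(tn) *)
  (forall (t1 : term S) (ts : seq (term S)) (tn : term S),
      lequiv (Dep (t1 :: ts) tn) (Imp (const_conj t1 ts) (Dep [::] tn))) /\
  (* (2) ~phi == phi -> Bot for atoms phi *)
  (forall (r : relsym S) (a : 'I_(rel_ar r) -> term S),
      lequiv (NRel r a) (Imp (Rel r a) Bot)) /\
  (forall t u : term S, lequiv (NEq t u) (Imp (Eq t u) Bot)) /\
  (forall (ts : seq (term S)) (t : term S),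
      lequiv (NDep ts t) (Imp (Dep ts t) Bot)) /\
  (* (3) *)
  (forall phi : formula S, flat phi -> lequiv (Imp (Imp phi Bot) Bot) phi) /\
  (* (4) *)
  (forall phi psi : formula S, flat phi -> flat psi ->
      lequiv (Tensor phi psi) (Imp (Imp phi Bot) psi)).
Proof.
split.
  move=> t1 ts tn M D X T _ _ /=; split.
    move=> H Y HY Hc s s' Ys Ys' _; apply: H; try by apply: HY.
    move: Hc => /cc_sat Hc u Hu; exact: Hc.
  move=> H s s' Xs Xs' Hu.
  apply: (H (fun x => x = s \/ x = s')); first by move=> x [->|->].
  - apply/cc_sat => t Ht x y [->|->] [->|->] //; [|symmetry]; exact: Hu.
  - by left.
  - by right.
  - by [].
split.
  move=> r a M D X T _ _ /=; split.
    move=> H Y HY HR s Ys; exact: H s (HY _ Ys) (HR s Ys).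
  move=> H s Xs HR; apply: (H (fun x => x = s) (fun x e => eq_ind_r X Xs e) _ s erefl).
  by move=> x ->.
split.
  move=> t u M D X T _ _ /=; split.
    move=> H Y HY HR s Ys; exact: H s (HY _ Ys) (HR s Ys).
  move=> H s Xs HR; apply: (H (fun x => x = s) (fun x e => eq_ind_r X Xs e) _ s erefl).
  by move=> x ->.
split.
  move=> ts t M D X T _ _ /=; split.
    move=> H Y HY _ s Ys; exact: H s (HY _ Ys).
  move=> H s Xs; apply: (H (fun x => x = s) (fun x e => eq_ind_r X Xs e) _ s erefl).
  by move=> x y -> -> _.
split.
  move=> phi F M D X T _ Fv; rewrite (F M D X T Fv); split.
    move=> H s Xs; apply: NNPP => Hn.
    apply: (H (fun x => x = s) (fun x e => eq_ind_r X Xs e) _ s erefl).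
    by apply/(neg_flat F T Fv (single_sub Xs)) => x ->.
  move=> H Y HY /(neg_flat F T Fv HY) HN s Ys.
  exact: HN s Ys (H s (HY _ Ys)).
move=> phi psi Fp Fq M D X T [Fvp Fvq] _; split.
  move=> [Y [Z [HX [HYp HZq]]]] W HW /(neg_flat Fp T Fvp HW) HN.
  apply/(flat_sub Fq T Fvq HW) => s Ws.
  have Hs := HW _ Ws.
  case: ((HX s).1 Hs) => [Ys|Zs].
    by exfalso; apply: (HN s Ws);
      apply: (proj1 (flat_sub Fp T Fvp (fun s Ys => (HX s).2 (or_introl Ys))) HYp).
  exact: (proj1 (flat_sub Fq T Fvq (fun s Zs => (HX s).2 (or_intror Zs))) HZq).
move=> H.
exists (fun s => X s /\ sat D (fun s' => s' = s) phi).
exists (fun s => X s /\ ~ sat D (fun s' => s' = s) phi).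
split.
  move=> s; split; last by case=> [[]|[]].
  by move=> Xs; case: (classic (sat D (fun s' => s' = s) phi)) => h; [left|right].
split.
  by apply/(flat_sub Fp T Fvp (fun s => @proj1 _ _)) => s [].
apply/(flat_sub Fq T Fvq (fun s => @proj1 _ _)) => s [Xs Hn].
apply: (H (fun x => x = s)) => //; first by move=> x ->.
by apply/(neg_flat Fp T Fvp (single_sub Xs)) => x ->.
Qed.
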